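(* Every statistically convergent sequence in an $S$-metric space $(X,S)$ has a convergent subsequence.
   Context: An $S$-metric on a nonempty set $X$ is a function $S:X^3\to[0,\infty)$ such that for all $x,y,z,a\in X$: $S(x,y,z)=0$ if and only if $x=y=z$, and $S(x,y,z)\le S(x,x,a)+S(y,y,a)+S(z,z,a)$. A sequence $\{y_n\}$ converges to $y$ if for every $\varepsilon>0$ there is $k$ with $S(y_n,y_n,y)<\varepsilon$ for all $n\ge k$. For $B\subset\mathbb N$ the natural density is $\delta(B)=\lim_{n\to\infty}\frac{|\{k\in B:k\le n\}|}{n}$ when the limit exists. A sequence $\{x_n\}$ is statistically convergent to $x\in X$ if for every $\varepsilon>0$, $\delta(\{n\in\mathbb N: S(x_n,x_n,x)\ge\varepsilon\})=0$. *)

(* Defs.v *)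
From Stdlib Require Import Reals Lra Lia ClassicalDescription.
Open Scope R_scope.

Definition is_S_metric {X : Type} (S : X -> X -> X -> R) : Prop :=
  (forall x y z, 0 <= S x y z) /\
  (forall x y z, S x y z = 0 <-> (x = y /\ y = z)) /\
  (forall x y z a, S x y z <= S x x a + S y y a + S z z a).

Definition S_converges {X : Type} (S : X -> X -> X -> R) (y : nat -> X) (l : X) : Prop :=
  forall eps, 0 < eps -> exists k, forall n, (k <= n)%nat -> S (y n) (y n) l < eps.

(* Natural numbers of the paper are {1,2,...}; a sequence x_1, x_2, ... is
   represented by x : nat -> X with x_k := x k for k >= 1 (x 0 is unused
   for density purposes, and density ignores finitely many indices anyway). *)

Fixpoint count_upto (B : nat -> Prop) (n : nat) : nat :=
  match n with
  | O => O
  | S m => (count_upto B m + (if excluded_middle_informative (B (S m)) then 1 else 0))%nat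
  end.

Definition has_density (B : nat -> Prop) (d : R) : Prop :=
  Un_cv (fun n => INR (count_upto B (S n)) / INR (S n)) d.

Definition stat_converges {X : Type} (S : X -> X -> X -> R) (x : nat -> X) (l : X) : Prop :=
  forall eps, 0 < eps -> has_density (fun n => (1 <= n)%nat /\ S (x n) (x n) l >= eps) 0.

(* Main.v *)
Require Import Defs.
From Stdlib Require Import Reals Lra Lia ClassicalEpsilon.
Open Scope R_scope.

Lemma count_lower (B : nat -> Prop) (N : nat) :
  (forall m, (N < m)%nat -> B m) -> forall n, (n - N <= count_upto B n)%nat.
Proof.
  intros HB n; induction n as [|m IH]; cbn [count_upto]; [lia|].
  destruct (ClassicalDescription.excluded_middle_informative (B (S m))) as [h|h].
  - lia.
  - assert (~ (N < S m)%nat) by (intro c; apply h, HB, c). lia.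
Qed.

Lemma dens0_not_all (B : nat -> Prop) (N : nat) :
  has_density B 0 -> exists n, (N < n)%nat /\ ~ B n.
Proof.
  intros Hd. apply Classical_Prop.NNPP. intros Hn.
  assert (HB : forall m, (N < m)%nat -> B m).
  { intros m Hm. destruct (Classical_Prop.classic (B m)) as [h|h]; auto.
    exfalso; apply Hn; exists m; auto. }
  destruct (Hd (/2)) as [K HK]; [lra|].
  set (n := (K + 2 * N + 2)%nat).
  specialize (HK n ltac:(unfold n; lia)).
  unfold Rdist in HK. rewrite Rminus_0_r in HK.
  pose proof (count_lower B N HB (S n)) as Hc.
  assert (Hc' : INR (S n - N) <= INR (count_upto B (S n))) by (apply le_INR; exact Hc).
  rewrite minus_INR in Hc' by (unfold n; lia).
  assert (HSn : 0 < INR (S n)) by (apply lt_0_INR; lia).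
  assert (HN : 2 * INR N + 2 <= INR (S n)).
  { replace 2 with (INR 2) by (simpl; lra). rewrite <- mult_INR, <- plus_INR.
    apply le_INR; unfold n; lia. }
  rewrite Rabs_right in HK.
  2:{ apply Rle_ge, Rmult_le_pos; [apply pos_INR | left; apply Rinv_0_lt_compat; exact HSn]. }
  apply (Rmult_lt_compat_r (INR (S n))) in HK; [|exact HSn].
  unfold Rdiv in HK. rewrite Rmult_assoc, Rinv_l, Rmult_1_r in HK by lra.
  lra.
Qed.

Lemma good_ex (X : Type) (S : X -> X -> X -> R) (x : nat -> X) (l : X) :
  stat_converges S x l -> forall N k : nat,
  exists n, (N < n)%nat /\ S (x n) (x n) l < / INR (Datatypes.S k).
Proof.
  intros Hs N k.
  assert (Hp : 0 < / INR (Datatypes.S k)) by (apply Rinv_0_lt_compat, lt_0_INR; lia).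
  destruct (dens0_not_all _ N (Hs _ Hp)) as [n [Hn Hb]].
  exists n; split; auto.
  apply Rnot_ge_lt. intro c. apply Hb. split; [lia|exact c].
Qed.

Theorem corollary3p1 (X : Type) (S : X -> X -> X -> R) (x : nat -> X) (l : X) :
  is_S_metric S ->
  stat_converges S x l ->
  exists (phi : nat -> nat) (y : X),
    (forall k, (phi k < phi (Datatypes.S k))%nat) /\
    S_converges S (fun k => x (phi k)) y.
Proof.
  intros _ Hs.
  pose (f := fun N k => proj1_sig (constructive_indefinite_description _ (good_ex X S x l Hs N k))).
  assert (Hf : forall N k, (N < f N k)%nat /\ S (x (f N k)) (x (f N k)) l < / INR (Datatypes.S k)).
  { intros N k. unfold f. destruct (constructive_indefinite_description _ _) as [n Hn]. exact Hn. }
  pose (phi := fix phi k := match k with O => f O O | Datatypes.S j => f (phi j) (Datatypes.S j) end).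
  assert (Hphi : forall k, S (x (phi k)) (x (phi k)) l < / INR (Datatypes.S k)).
  { intros [|k]; simpl; apply Hf. }
  exists phi, l. split.
  - intros k. simpl. apply Hf.
  - intros eps He.
    destruct (archimed (/ eps)) as [H1 _].
    assert (Hz : (0 <= up (/ eps))%Z).
    { apply le_IZR. pose proof (Rinv_0_lt_compat _ He). simpl; lra. }
    exists (Z.to_nat (up (/ eps))). intros n Hn.
    eapply Rlt_le_trans; [apply Hphi|].
    assert (Hi : / eps < INR (Datatypes.S n)).
    { eapply Rlt_le_trans; [exact H1|]. rewrite <- (Znat.Z2Nat.id _ Hz), <- INR_IZR_INZ.
      apply le_INR; lia. }
    assert (0 < INR (Datatypes.S n)) by (apply lt_0_INR; lia).
    rewrite <- (Rinv_inv eps). left. apply Rinv_lt_contravar; [|exact Hi].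
    apply Rmult_lt_0_compat; [apply Rinv_0_lt_compat, He | assumption].
Qed.
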